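(* Let $E$ be a row-finite graph and let $H_1\subseteq H_2$ be hereditary saturated subsets of $E^0$. Then there is a $\mathbb Z$-monoid isomorphism $M^{\mathrm{gr}}_{H_2/H_1}\cong M^{\mathrm{gr}}_{E_{H_2}}/M^{\mathrm{gr}}_{E_{H_1}}$ (sending $v(i)$, $v\in H_2\setminus H_1$, to the class of $v(i)$). In particular, for a hereditary saturated subset $H$ of $E^0$ and the $\mathbb Z$-order ideal $I$ of $M^{\mathrm{gr}}_E$ generated by $\{v(i):v\in H,i\in\mathbb Z\}$, there is a $\mathbb Z$-monoid isomorphism $M^{\mathrm{gr}}_{E/H}\cong M^{\mathrm{gr}}_E/I$.
   Context: A graph $E=(E^0,E^1,r,s)$ is row-finite if each vertex emits finitely many edges; a sink is a vertex emitting no edges. $H\subseteq E^0$ is hereditary if $s(e)\in H$ implies $r(e)\in H$; it is saturated if every non-sink $v$ with $r(s^{-1}(v))\subseteq H$ lies in $H$. For a row-finite graph $G$, $M^{\mathrm{gr}}_G$ is the commutative monoid generated by symbols $v(i)$ ($v\in G^0$, $i\in\mathbb Z$) subject to $v(i)=\sum_{e\in s^{-1}(v)}r(e)(i-1)$ for every non-sink $v$ and every $i$; $\mathbb Z$ acts by ${}^n v(i)=v(i-n)$. The restriction graph $E_H$ has vertices $H$, edges $\{e:s(e)\in H\}$. For $H_1\subseteq H_2$ hereditary saturated, the graph $H_2/H_1$ has vertices $H_2\setminus H_1$ and edges $\{e\in E^1: s(e)\in H_2,\ r(e)\notin H_1\}$ with restricted $r,s$; $E/H:=E^0/H$ (vertices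 $E^0\setminus H$, edges with $r(e)\notin H$). The natural map $M^{\mathrm{gr}}_{E_{H_1}}\to M^{\mathrm{gr}}_{E_{H_2}}$ ($v(i)\mapsto v(i)$) is used to regard $M^{\mathrm{gr}}_{E_{H_1}}$ as a submonoid of $M^{\mathrm{gr}}_{E_{H_2}}$. For a submonoid $N$ of a commutative monoid $M$, $M/N$ is $M$ modulo the congruence $a\sim b$ iff $a+i=b+j$ for some $i,j\in N$. *)

(* Defs.v *)
(* Graphs with arbitrary (possibly infinite) vertex/edge types;
   commutative monoids given by presentations, represented as setoids on
   lists (free monoid) modulo a congruence that includes permutation. *)
From Stdlib Require Import ZArith List Permutation.
Import ListNotations.
Open Scope Z_scope.

Record Graph := mkGraph {
  V : Type;  Ed : Type;
  src : Ed -> V;  rng : Ed -> V }.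
Arguments src {g}. Arguments rng {g}.

Definition row_finite (G : Graph) : Prop :=
  forall v : V G, exists l : list (Ed G), NoDup l /\ forall e, In e l <-> src e = v.

Definition sink (G : Graph) (v : V G) : Prop := forall e : Ed G, src e <> v.

Definition hereditary (G : Graph) (H : V G -> Prop) : Prop :=
  forall e : Ed G, H (src e) -> H (rng e).

Definition saturated (G : Graph) (H : V G -> Prop) : Prop :=
  forall v, ~ sink G v -> (forall e : Ed G, src e = v -> H (rng e)) -> H v.

Inductive cong {X : Type} (R : list X -> list X -> Prop) : list X -> list X -> Prop :=
| cong_base a b : R a b -> cong R a b
| cong_refl a : cong R a a
| cong_sym a b : cong R a b -> cong R b a
| cong_trans a b c : cong R a b -> cong R b c -> cong R a c
| cong_perm a b : Permutation a b -> cong R a b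
| cong_app a b c d : cong R a b -> cong R c d -> cong R (a ++ c) (b ++ d).

(* generator v(i) is the pair (v, i); an element is a finite sum of generators *)
Definition gen (G : Graph) : Type := (V G * Z)%type.

Definition zshift (G : Graph) (n : Z) (x : gen G) : gen G := (fst x, snd x - n).

Inductive graph_rel (G : Graph) : list (gen G) -> list (gen G) -> Prop :=
| graph_rel_intro (v : V G) (i : Z) (l : list (Ed G)) :
    NoDup l -> (forall e, In e l <-> src e = v) -> l <> [] ->
    graph_rel G [(v, i)] (map (fun e => (rng e, i - 1)) l).

Definition Mgr_eq (G : Graph) : list (gen G) -> list (gen G) -> Prop := cong (graph_rel G).

Definition quot_eq {X : Type} (eqM : list X -> list X -> Prop) (N : list X -> Prop)
  (a b : list X) : Prop :=
  exists i j, N i /\ N j /\ eqM (a ++ i) (b ++ j).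

Definition image_sub {X Y : Type} (eqM : list X -> list X -> Prop) (g : Y -> X)
  (x : list X) : Prop := exists z : list Y, eqM x (map g z).

Definition zmon_iso {A B : Type} (eqA : list A -> list A -> Prop) (eqB : list B -> list B -> Prop)
  (shA : Z -> A -> A) (shB : Z -> B -> B) (f : list A -> list B) : Prop :=
  (forall a b, eqA a b -> eqB (f a) (f b)) /\
  (forall a b, eqB (f a) (f b) -> eqA a b) /\
  (forall y, exists x, eqB (f x) y) /\
  eqB (f []) [] /\
  (forall a b, eqB (f (a ++ b)) (f a ++ f b)) /\
  (forall n a, eqB (f (map (shA n) a)) (map (shB n) (f a))).

Definition Z_order_ideal {X : Type} (eqM : list X -> list X -> Prop) (sh : Z -> X -> X)
  (I : list X -> Prop) : Prop :=
  (forall a b, eqM a b -> I a -> I b) /\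
  I [] /\
  (forall a b, I a -> I b -> I (a ++ b)) /\
  (forall a b, I (a ++ b) -> I a /\ I b) /\
  (forall n a, I a -> I (map (sh n) a)).

Definition gen_Z_order_ideal {X : Type} (eqM : list X -> list X -> Prop) (sh : Z -> X -> X)
  (S : list X -> Prop) (a : list X) : Prop :=
  forall I, Z_order_ideal eqM sh I -> (forall s, S s -> I s) -> I a.

Section Constructions.
Variable E : Graph.

Lemma restr_rng_ok (H : V E -> Prop) (hH : hereditary E H) (e : {e : Ed E | H (src e)}) :
  H (rng (proj1_sig e)).
Proof. exact (hH _ (proj2_sig e)). Qed.

Definition restr_graph (H : V E -> Prop) (hH : hereditary E H) : Graph :=
  {| V := {v : V E | H v};
     Ed := {e : Ed E | H (src e)};
     src := fun e => exist H (src (proj1_sig e)) (proj2_sig e);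
     rng := fun e => exist H (rng (proj1_sig e)) (restr_rng_ok H hH e) |}.

Lemma quot_src_ok (H1 H2 : V E -> Prop) (h1 : hereditary E H1)
  (e : {e : Ed E | H2 (src e) /\ ~ H1 (rng e)}) :
  H2 (src (proj1_sig e)) /\ ~ H1 (src (proj1_sig e)).
Proof.
  destruct e as [e [He1 He2]]; simpl; split; [exact He1|].
  intro Hs; apply He2, h1, Hs.
Qed.

Lemma quot_rng_ok (H1 H2 : V E -> Prop) (h2 : hereditary E H2)
  (e : {e : Ed E | H2 (src e) /\ ~ H1 (rng e)}) :
  H2 (rng (proj1_sig e)) /\ ~ H1 (rng (proj1_sig e)).
Proof. destruct e as [e [He1 He2]]; simpl; split; [exact (h2 _ He1)| exact He2]. Qed.

Definition quot_graph (H1 H2 : V E -> Prop) (h1 : hereditary E H1) (h2 : hereditary E H2) : Graph :=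
  {| V := {v : V E | H2 v /\ ~ H1 v};
     Ed := {e : Ed E | H2 (src e) /\ ~ H1 (rng e)};
     src := fun e => exist _ (src (proj1_sig e)) (quot_src_ok H1 H2 h1 e);
     rng := fun e => exist _ (rng (proj1_sig e)) (quot_rng_ok H1 H2 h2 e) |}.

Lemma hereditary_all : hereditary E (fun _ => True).
Proof. intros e _; exact I. Qed.

Definition quot_by (H : V E -> Prop) (hH : hereditary E H) : Graph :=
  quot_graph H (fun _ => True) hH hereditary_all.

Definition restr_incl (H1 H2 : V E -> Prop) (h1 : hereditary E H1) (h2 : hereditary E H2)
  (sub : forall v, H1 v -> H2 v) (x : gen (restr_graph H1 h1)) : gen (restr_graph H2 h2) :=
  (exist H2 (proj1_sig (fst x)) (sub _ (proj2_sig (fst x))), snd x).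

Definition quot_to_restr (H1 H2 : V E -> Prop) (h1 : hereditary E H1) (h2 : hereditary E H2)
  (x : gen (quot_graph H1 H2 h1 h2)) : gen (restr_graph H2 h2) :=
  (exist H2 (proj1_sig (fst x)) (proj1 (proj2_sig (fst x))), snd x).

Definition quot_by_to_E (H : V E -> Prop) (hH : hereditary E H)
  (x : gen (quot_by H hH)) : gen E := (proj1_sig (fst x), snd x).

Definition Mgr_quot_eq (H1 H2 : V E -> Prop) (h1 : hereditary E H1) (h2 : hereditary E H2)
  (sub : forall v, H1 v -> H2 v) : list (gen (restr_graph H2 h2)) -> list (gen (restr_graph H2 h2)) -> Prop :=
  quot_eq (Mgr_eq (restr_graph H2 h2))
          (image_sub (Mgr_eq (restr_graph H2 h2)) (restr_incl H1 H2 h1 h2 sub)).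

Definition ideal_of (H : V E -> Prop) : list (gen E) -> Prop :=
  gen_Z_order_ideal (Mgr_eq E) (zshift E)
    (fun s => exists v i, H v /\ s = [(v, i)]).

End Constructions.

(* Main.v *)
Require Import Defs.
From Stdlib Require Import ZArith List.
From Stdlib Require Import Permutation Classical ClassicalEpsilon ProofIrrelevance.
Import ListNotations.

Lemma sig_eq {A} {P : A -> Prop} (a b : sig P) : proj1_sig a = proj1_sig b -> a = b.
Proof. destruct a as [a pa], b as [b pb]; simpl; intros ->; f_equal; apply proof_irrelevance. Qed.

Definition olist {A} (o : option A) : list A := match o with Some c => [c] | None => [] end.

Lemma in_fm {A C} (o : A -> option C) l c :
  In c (flat_map (fun a => olist (o a)) l) <-> exists a, In a l /\ o a = Some c.
Proof.
  rewrite in_flat_map; split; intros [a [Ha Hb]]; exists a; split; auto.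
  - destruct (o a) eqn:E; simpl in Hb; [destruct Hb as [->|[]]; reflexivity | destruct Hb].
  - rewrite Hb; simpl; auto.
Qed.

Lemma NoDup_fm {A C} (o : A -> option C) (g : C -> A) (hg : forall a c, o a = Some c -> g c = a) l :
  NoDup l -> NoDup (flat_map (fun a => olist (o a)) l).
Proof.
  induction 1 as [|a l Ha Hl IH]; simpl; [constructor|].
  destruct (o a) eqn:E; simpl; [|exact IH].
  constructor; [|exact IH].
  intros Hc; apply in_fm in Hc; destruct Hc as [a' [Ha' Ho]].
  apply hg in E; apply hg in Ho. rewrite <- E in Ha; rewrite <- Ho in Ha'. contradiction.
Qed.

Lemma cong_nil {X} (R : list X -> list X -> Prop) (hR : forall a b, R a b -> a <> [] /\ b <> []) a b :
  cong R a b -> (a = [] <-> b = []).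
Proof.
  induction 1 as [a b Hab| a | a b H IH | a b c H1 IH1 H2 IH2 | a b Hp | a b c d H1 IH1 H2 IH2].
  - destruct (hR _ _ Hab); tauto.
  - tauto.
  - tauto.
  - tauto.
  - split; intros E; subst.
    + apply Permutation_nil; auto.
    + apply Permutation_nil, Permutation_sym; auto.
  - split; intro E; apply app_eq_nil in E; destruct E as [E1 E2];
      [apply IH1 in E1; apply IH2 in E2 | apply IH1 in E1; apply IH2 in E2]; subst; reflexivity.
Qed.

Section QE.
Context {X : Type} (R : list X -> list X -> Prop) (N : list X -> Prop)
  (Nnil : N []) (Napp : forall a b, N a -> N b -> N (a ++ b)).

Lemma qe_of a b : cong R a b -> quot_eq (cong R) N a b.
Proof. intros H; exists [], []; split; [exact Nnil|split;[exact Nnil|]]; rewrite !app_nil_r; exact H. Qed.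

Lemma qe_sym a b : quot_eq (cong R) N a b -> quot_eq (cong R) N b a.
Proof. intros [i [j [Hi [Hj H]]]]; exists j, i; split; [|split]; auto; apply cong_sym; auto. Qed.

Lemma qe_trans a b c : quot_eq (cong R) N a b -> quot_eq (cong R) N b c -> quot_eq (cong R) N a c.
Proof.
  intros [i [j [Hi [Hj H1]]]] [k [l [Hk [Hl H2]]]].
  exists (i ++ k), (l ++ j); split; [auto|split; [auto|]].
  rewrite !app_assoc.
  apply cong_trans with ((b ++ j) ++ k); [apply cong_app; [exact H1| apply cong_refl]|].
  apply cong_trans with ((b ++ k) ++ j).
  - apply cong_perm; rewrite <- !app_assoc; apply Permutation_app_head, Permutation_app_comm.
  - apply cong_app; [exact H2| apply cong_refl].
Qed.

Lemma perm4 (a c i k : list X) : Permutation ((a ++ c) ++ (i ++ k)) ((a ++ i) ++ (c ++ k)).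
Proof.
  rewrite <- !app_assoc; apply Permutation_app_head; rewrite !app_assoc;
  apply Permutation_app_tail, Permutation_app_comm.
Qed.

Lemma qe_app a b c d : quot_eq (cong R) N a b -> quot_eq (cong R) N c d ->
  quot_eq (cong R) N (a ++ c) (b ++ d).
Proof.
  intros [i [j [Hi [Hj H1]]]] [k [l [Hk [Hl H2]]]].
  exists (i ++ k), (j ++ l); split; [auto|split; [auto|]].
  eapply cong_trans; [apply cong_perm, perm4|].
  eapply cong_trans; [apply cong_app; [exact H1|exact H2]|].
  apply cong_perm, Permutation_sym, perm4.
Qed.

Lemma qe_map_cong {Y} (RY : list Y -> list Y -> Prop) (g : Y -> X)
  (hb : forall a b, RY a b -> quot_eq (cong R) N (map g a) (map g b)) a b :
  cong RY a b -> quot_eq (cong R) N (map g a) (map g b).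
Proof.
  induction 1.
  - auto.
  - apply qe_of, cong_refl.
  - apply qe_sym; auto.
  - eapply qe_trans; eauto.
  - apply qe_of, cong_perm, Permutation_map; auto.
  - rewrite !map_app; apply qe_app; auto.
Qed.
End QE.

Section Abs.
Variables (B Q : Graph) (K : V B -> Prop).
Hypothesis hK : hereditary B K.
Hypothesis sK : saturated B K.
Hypothesis rfB : row_finite B.
Variables (vi : V Q -> V B) (ei : Ed Q -> Ed B).
Hypothesis hsrc : forall d, src (ei d) = vi (src d).
Hypothesis hrng : forall d, rng (ei d) = vi (rng d).
Hypothesis vinj : forall a b, vi a = vi b -> a = b.
Hypothesis einj : forall a b, ei a = ei b -> a = b.
Hypothesis vK : forall q, ~ K (vi q).
Hypothesis vsurj : forall v, ~ K v -> exists q, vi q = v.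
Hypothesis esurj : forall e, ~ K (rng e) -> exists d, ei d = e.

Definition vpi (v : V B) : option (V Q) :=
  match excluded_middle_informative (exists q, vi q = v) with
  | left h => Some (proj1_sig (constructive_indefinite_description _ h))
  | right _ => None end.

Definition epi (e : Ed B) : option (Ed Q) :=
  match excluded_middle_informative (exists d, ei d = e) with
  | left h => Some (proj1_sig (constructive_indefinite_description _ h))
  | right _ => None end.

Lemma vpi_some v q : vpi v = Some q -> vi q = v.
Proof.
  unfold vpi; destruct excluded_middle_informative as [h|h]; [|discriminate].
  destruct (constructive_indefinite_description _ h) as [q' hq']; simpl.
  intros E; injection E; intros <-; exact hq'.
Qed.

Lemma vpi_none v : vpi v = None -> K v.
Proof.
  unfold vpi; destruct excluded_middle_informative as [h|h]; [discriminate|].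
  intros _; apply NNPP; intro nk; apply h, vsurj, nk.
Qed.

Lemma vpi_vi q : vpi (vi q) = Some q.
Proof.
  destruct (vpi (vi q)) eqn:E.
  - apply vpi_some in E; f_equal; apply vinj; auto.
  - apply vpi_none in E; exfalso; apply (vK q E).
Qed.

Lemma vpi_K v : K v -> vpi v = None.
Proof.
  destruct (vpi v) eqn:E; auto.
  apply vpi_some in E; subst; intro Hk; exfalso; apply (vK _ Hk).
Qed.

Lemma epi_some e d : epi e = Some d -> ei d = e.
Proof.
  unfold epi; destruct excluded_middle_informative as [h|h]; [|discriminate].
  destruct (constructive_indefinite_description _ h) as [q' hq']; simpl.
  intros E; injection E; intros <-; exact hq'.
Qed.

Lemma epi_none e : epi e = None -> K (rng e).
Proof.
  unfold epi; destruct excluded_middle_informative as [h|h]; [discriminate|].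
  intros _; apply NNPP; intro nk; apply h, esurj, nk.
Qed.

Lemma epi_ei d : epi (ei d) = Some d.
Proof.
  destruct (epi (ei d)) eqn:E.
  - apply epi_some in E; f_equal; apply einj; auto.
  - apply epi_none in E; exfalso; rewrite hrng in E; apply (vK _ E).
Qed.

Definition pig (x : gen B) : list (gen Q) :=
  match vpi (fst x) with Some q => [(q, snd x)] | None => [] end.
Definition P (l : list (gen B)) : list (gen Q) := flat_map pig l.
Definition ig (y : gen Q) : gen B := (vi (fst y), snd y).

Lemma P_app a b : P (a ++ b) = P a ++ P b.
Proof. apply flat_map_app. Qed.

Lemma P_K l : (forall x, In x l -> K (fst x)) -> P l = [].
Proof.
  induction l as [|x l IH]; intros H; simpl; auto.
  unfold pig; rewrite vpi_K; [apply IH; intros; apply H; right; auto | apply H; left; auto].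
Qed.

Lemma P_ig a : P (map ig a) = a.
Proof.
  induction a as [|[q i] a IH]; simpl; auto.
  unfold pig; simpl; rewrite vpi_vi; simpl; f_equal; auto.
Qed.

Lemma P_shift n a : P (map (zshift B n) a) = map (zshift Q n) (P a).
Proof.
  induction a as [|[v i] a IH]; simpl; auto.
  unfold pig; simpl; destruct (vpi v); simpl; rewrite IH; reflexivity.
Qed.

Lemma P_split y : exists k, Permutation y (map ig (P y) ++ k) /\ forall x, In x k -> K (fst x).
Proof.
  induction y as [|[v i] y IH].
  - exists []; simpl; split; [constructor| intros _ []].
  - destruct IH as [k [Hp Hk]].
    simpl; unfold pig at 1; simpl.
    destruct (vpi v) eqn:E.
    + exists k; split; auto. cbn. unfold ig at 1; simpl. rewrite (vpi_some _ _ E). apply perm_skip; exact Hp.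
    + exists ((v,i)::k); split.
      * eapply Permutation_trans; [apply perm_skip, Hp|]. apply Permutation_middle.
      * intros x [<-|Hx]; [simpl; apply vpi_none; auto| auto].
Qed.

Definition el (l : list (Ed B)) : list (Ed Q) := flat_map (fun e => olist (epi e)) l.

Lemma el_in d l : In d (el l) <-> In (ei d) l.
Proof.
  unfold el; rewrite in_fm; split.
  - intros [e [He Ho]]; apply epi_some in Ho; subst; auto.
  - intros H; exists (ei d); split; auto; apply epi_ei.
Qed.

Lemma el_nodup l : NoDup l -> NoDup (el l).
Proof. apply (NoDup_fm epi ei epi_some). Qed.

Lemma P_map_rng l i : P (map (fun e => (rng e, i)) l) = map (fun d => (rng d, i)) (el l).
Proof.
  induction l as [|e l IH]; simpl; auto.
  unfold el in *; simpl. destruct (epi e) eqn:Ee; simpl.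
  - unfold pig; simpl. rewrite <- (epi_some _ _ Ee), hrng, vpi_vi. simpl. f_equal. exact IH.
  - unfold pig; simpl. rewrite vpi_K; [exact IH| apply epi_none; auto].
Qed.

Lemma perm_split l i : Permutation (map (fun e => (rng e, i)) l)
  (map ig (map (fun d => (rng d, i)) (el l)) ++
   flat_map (fun e => match epi e with Some _ => [] | None => [(rng e, i)] end) l).
Proof.
  induction l as [|e l IH]; simpl; [constructor|].
  unfold el in *; simpl. destruct (epi e) eqn:Ee; simpl.
  - unfold ig at 1; simpl. rewrite <- (epi_some _ _ Ee), hrng. apply perm_skip; exact IH.
  - eapply Permutation_trans; [apply perm_skip, IH|apply Permutation_middle].
Qed.

Lemma P_rel a b : graph_rel B a b -> Mgr_eq Q (P a) (P b).
Proof.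
  intros [v i l Hnd Hin Hne].
  change (P [(v,i)]) with (pig (v,i) ++ []). unfold pig; simpl fst; simpl snd.
  destruct (vpi v) as [t|] eqn:E.
  - pose proof (vpi_some _ _ E) as hv.
    rewrite P_map_rng; simpl app. apply cong_base; constructor.
    + apply el_nodup, Hnd.
    + intros d. rewrite el_in, Hin, hsrc; split; [intro; apply vinj; congruence | intros ->; congruence].
    + intro Hnil. apply (vK t). rewrite hv. apply sK.
      * intro Hs. destruct l as [|e l']; [contradiction|]. apply (Hs e), Hin; left; auto.
      * intros e He. destruct (epi e) as [t0|] eqn:Ee; [|apply epi_none; auto]. exfalso.
        assert (Hd : In t0 (el l)) by (apply el_in; rewrite (epi_some _ _ Ee); apply Hin; auto).
        rewrite Hnil in Hd; contradiction.
  - rewrite P_K; [simpl; apply cong_refl|].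
    intros x Hx. apply in_map_iff in Hx. destruct Hx as [e [<- He]]. simpl.
    apply hK. rewrite (proj1 (Hin e) He). apply vpi_none; auto.
Qed.

Lemma P_cong a b : Mgr_eq B a b -> Mgr_eq Q (P a) (P b).
Proof.
  induction 1.
  - apply P_rel; auto.
  - apply cong_refl.
  - apply cong_sym; auto.
  - eapply cong_trans; eauto.
  - apply cong_perm; unfold P; apply Permutation_flat_map; auto.
  - rewrite !P_app; apply cong_app; auto.
Qed.

Lemma relQ_ne a b : graph_rel Q a b -> a <> [] /\ b <> [].
Proof.
  intros [v i l Hnd Hin Hne]; split; [discriminate|].
  destruct l; [contradiction| discriminate].
Qed.

Lemma J_ideal : Z_order_ideal (Mgr_eq B) (zshift B) (fun a => Mgr_eq Q (P a) []).
Proof.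
  split; [|split; [|split; [|split]]].
  - intros a b H Ha. eapply cong_trans; [apply cong_sym, P_cong, H| exact Ha].
  - apply cong_refl.
  - intros a b Ha Hb. rewrite P_app. apply (cong_app _ _ [] _ []); auto.
  - intros a b H. rewrite P_app in H. apply (cong_nil _ relQ_ne) in H.
    assert (E : P a ++ P b = []) by (apply H; reflexivity).
    apply app_eq_nil in E; destruct E as [E1 E2]; rewrite E1, E2; split; apply cong_refl.
  - intros n a H. apply (cong_nil _ relQ_ne) in H.
    assert (E : P a = []) by (apply H; reflexivity).
    rewrite P_shift, E; apply cong_refl.
Qed.

Variable N : list (gen B) -> Prop.
Hypothesis Nnil : N [].
Hypothesis Napp : forall a b, N a -> N b -> N (a ++ b).
Hypothesis NK : forall l, (forall x, In x l -> K (fst x)) -> N l.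
Hypothesis NJ : forall n, N n -> forall J, Z_order_ideal (Mgr_eq B) (zshift B) J ->
  (forall v i, K v -> J [(v,i)]) -> J n.

Lemma NP n : N n -> Mgr_eq Q (P n) [].
Proof.
  intros Hn; apply (NJ n Hn _ J_ideal).
  intros v i Hv; rewrite P_K; [apply cong_refl|].
  intros x [<-|[]]; exact Hv.
Qed.

Lemma ig_rel a b : graph_rel Q a b -> quot_eq (Mgr_eq B) N (map ig a) (map ig b).
Proof.
  intros [q i lQ Hnd Hin Hne]. destruct (rfB (vi q)) as [l [Hl Hli]].
  assert (Hperm : Permutation lQ (el l)).
  { apply NoDup_Permutation; [exact Hnd| apply el_nodup, Hl|].
    intros d; rewrite el_in, Hin, Hli, hsrc; split; [intros ->; auto| intro; apply vinj; auto]. }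
  exists [], (flat_map (fun e => match epi e with Some _ => [] | None => [(rng e, i-1)] end) l).
  split; [exact Nnil| split].
  - apply NK. intros x Hx. apply in_flat_map in Hx. destruct Hx as [e [He Hx]].
    destruct (epi e) eqn:Ee; [destruct Hx| destruct Hx as [<-|[]]; simpl; apply epi_none; auto].
  - change (map ig [(q,i)] ++ []) with [(vi q, i)].
    eapply cong_trans.
    + apply cong_base. apply (graph_rel_intro B (vi q) i l Hl Hli).
      intro Hn. destruct lQ as [|d lQ']; [contradiction|].
      assert (Hd : In (ei d) l) by (apply Hli; rewrite hsrc; f_equal; apply Hin; left; auto).
      rewrite Hn in Hd; contradiction.
    + apply cong_perm. eapply Permutation_trans; [apply perm_split|].
      apply Permutation_app_tail. apply Permutation_map, Permutation_map, Permutation_sym, Hperm.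
Qed.

Theorem abs_iso : zmon_iso (Mgr_eq Q) (quot_eq (Mgr_eq B) N) (zshift Q) (zshift B) (map ig).
Proof.
  split; [|split; [|split; [|split; [|split]]]].
  - intros a b H. exact (qe_map_cong (graph_rel B) N Nnil Napp (graph_rel Q) ig ig_rel a b H).
  - intros a b [i [j [Hi [Hj H]]]]. apply P_cong in H. rewrite !P_app, !P_ig in H.
    apply cong_trans with (a ++ []); [rewrite app_nil_r; apply cong_refl|].
    apply cong_trans with (a ++ P i); [apply cong_app; [apply cong_refl| apply cong_sym, NP, Hi]|].
    apply cong_trans with (b ++ P j); [exact H|].
    apply cong_trans with (b ++ []); [apply cong_app; [apply cong_refl| apply NP, Hj]|].
    rewrite app_nil_r; apply cong_refl.
  - intros y. destruct (P_split y) as [k [Hp Hk]]. exists (P y). exists k, [].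
    split; [apply NK, Hk| split; [exact Nnil|]].
    rewrite app_nil_r; apply cong_perm, Permutation_sym, Hp.
  - apply (qe_of _ _ Nnil), cong_refl.
  - intros a b; rewrite map_app; apply (qe_of _ _ Nnil), cong_refl.
  - intros n a. replace (map ig (map (zshift Q n) a)) with (map (zshift B n) (map ig a)).
    + apply (qe_of _ _ Nnil), cong_refl.
    + rewrite !map_map; apply map_ext; intros [q i]; reflexivity.
Qed.

End Abs.

Theorem lemma3p3 (E : Graph) (hrf : row_finite E) :
  (forall (H1 H2 : V E -> Prop) (h1 : hereditary E H1) (h2 : hereditary E H2)
          (sub : forall v, H1 v -> H2 v),
     saturated E H1 -> saturated E H2 ->
     exists f : list (gen (quot_graph E H1 H2 h1 h2)) -> list (gen (restr_graph E H2 h2)),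
       zmon_iso (Mgr_eq (quot_graph E H1 H2 h1 h2)) (Mgr_quot_eq E H1 H2 h1 h2 sub)
                (zshift _) (zshift _) f /\
       (forall x, Mgr_quot_eq E H1 H2 h1 h2 sub (f [x]) [quot_to_restr E H1 H2 h1 h2 x])) /\
  (forall (H : V E -> Prop) (hH : hereditary E H),
     saturated E H ->
     exists f : list (gen (quot_by E H hH)) -> list (gen E),
       zmon_iso (Mgr_eq (quot_by E H hH)) (quot_eq (Mgr_eq E) (ideal_of E H))
                (zshift _) (zshift _) f /\
       (forall x, quot_eq (Mgr_eq E) (ideal_of E H) (f [x]) [quot_by_to_E E H hH x])).
Proof.
  split.
  - intros H1 H2 h1 h2 sub s1 s2.
    set (B := restr_graph E H2 h2). set (Q := quot_graph E H1 H2 h1 h2).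
    set (vi := fun q : V Q => (exist H2 (proj1_sig q) (proj1 (proj2_sig q)) : V B)).
    set (ei := fun d : Ed Q => (exist (fun e => H2 (src e)) (proj1_sig d) (proj1 (proj2_sig d)) : Ed B)).
    set (N := image_sub (Mgr_eq B) (restr_incl E H1 H2 h1 h2 sub)).
    assert (Nnil : N []) by (exists []; apply cong_refl).
    exists (map (ig B Q vi)). split.
    + unfold Mgr_quot_eq.
      apply (abs_iso B Q (fun v : V B => H1 (proj1_sig v))) with (ei := ei); auto.
      * intros e He. exact (h1 _ He).
      * intros v Hns Hall. apply s1.
        -- intro Hs. apply Hns. intros e He. apply (Hs (proj1_sig e)). rewrite <- He. reflexivity.
        -- intros e He.
           assert (H : H2 (src e)) by (rewrite He; exact (proj2_sig v)).
           apply (Hall (exist _ e H)). apply sig_eq. simpl. exact He.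
      * intros v. destruct (hrf (proj1_sig v)) as [l [Hnd Hin]].
        set (o := fun e : Ed E => match excluded_middle_informative (H2 (src e)) with
                   | left h => Some (exist (fun e => H2 (src e)) e h) | right _ => None end).
        exists (flat_map (fun e => olist (o e)) l). split.
        -- apply (NoDup_fm o (@proj1_sig _ _)); [|exact Hnd].
           intros a c. unfold o. destruct excluded_middle_informative; [intros E'; injection E'; intros <-; reflexivity| discriminate].
        -- intros e'. split.
           ++ intros Hx. apply (in_fm o l e') in Hx. destruct Hx as [e [He Ho]]. unfold o in Ho. destruct excluded_middle_informative; [|discriminate].
              injection Ho; intros <-. apply sig_eq. simpl. apply Hin; auto.
           ++ intros Hs. apply (in_fm o l e'). exists (proj1_sig e'). split.
              ** apply Hin. rewrite <- Hs. reflexivity.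
              ** unfold o. destruct excluded_middle_informative as [h|h].
                 --- f_equal; apply sig_eq; reflexivity.
                 --- exfalso; exact (h (proj2_sig e')).
      * intros d; apply sig_eq; reflexivity.
      * intros d; apply sig_eq; reflexivity.
      * intros a b Eab. apply sig_eq. apply (f_equal (@proj1_sig _ _)) in Eab. exact Eab.
      * intros a b Eab. apply sig_eq. apply (f_equal (@proj1_sig _ _)) in Eab. exact Eab.
      * intros q. exact (proj2 (proj2_sig q)).
      * intros v Hv. exists (exist _ (proj1_sig v) (conj (proj2_sig v) Hv)). apply sig_eq; reflexivity.
      * intros e He. exists (exist _ (proj1_sig e) (conj (proj2_sig e) He)). apply sig_eq; reflexivity.
      * intros a b [z Hz] [w Hw]. exists (z ++ w). rewrite map_app. apply cong_app; auto.
      * intros l Hl. induction l as [|[v i] l IH].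
        -- exact Nnil.
        -- destruct IH as [z Hz]; [intros; apply Hl; right; auto|].
           assert (Hx : H1 (proj1_sig v)) by exact (Hl (v,i) (or_introl eq_refl)).
           exists ((exist H1 (proj1_sig v) Hx, i) :: z).
           assert (heq : restr_incl E H1 H2 h1 h2 sub (exist H1 (proj1_sig v) Hx, i) = (v, i))
             by (unfold restr_incl; simpl; f_equal; apply sig_eq; reflexivity).
           cbn [map]. rewrite heq.
           apply (cong_app _ [(v,i)] [(v,i)] l _ (cong_refl _ _) Hz).
      * intros n [z Hz] J HJ Hg. destruct HJ as [Jeq [Jnil [Japp [Jher Jsh]]]].
        apply (Jeq (map (restr_incl E H1 H2 h1 h2 sub) z) n (cong_sym _ _ _ Hz)).
        clear Hz n. induction z as [|a z IHz]; [exact Jnil|].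
        change (map (restr_incl E H1 H2 h1 h2 sub) (a :: z)) with
          ([restr_incl E H1 H2 h1 h2 sub a] ++ map (restr_incl E H1 H2 h1 h2 sub) z).
        apply Japp; [|exact IHz].
        unfold restr_incl. apply Hg. exact (proj2_sig (fst a)).
    + intros x. exists [], []. split; [exact Nnil| split; [exact Nnil| apply cong_refl]].
  - intros H hH sH.
    set (Q := quot_by E H hH).
    set (vi := fun q : V Q => (proj1_sig q : V E)).
    assert (Nnil : ideal_of E H []) by (intros I [_ [Inil _]] _; exact Inil).
    exists (map (ig E Q vi)). split.
    + apply (abs_iso E Q H) with (ei := fun d : Ed Q => (proj1_sig d : Ed E)); auto.
      * intros a b Eab. apply sig_eq. exact Eab.
      * intros a b Eab. apply sig_eq. exact Eab.
      * intros q. exact (proj2 (proj2_sig q)).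
      * intros v Hv. exists (exist _ v (conj I Hv)). reflexivity.
      * intros e He. exists (exist _ e (conj I He)). reflexivity.
      * intros a b Ha Hb J HJ HS. pose proof HJ as [_ [_ [Japp _]]]. apply Japp; [apply Ha | apply Hb]; auto.
      * intros l Hl J HJ HS. pose proof HJ as [_ [Jnil [Japp _]]].
        induction l as [|[v i] l IH]; [exact Jnil|].
        change ((v,i) :: l) with ([(v,i)] ++ l). apply Japp.
        -- apply HS. exists v, i. split; [exact (Hl (v,i) (or_introl eq_refl))| reflexivity].
        -- apply IH. intros; apply Hl; right; auto.
      * intros n Hn J HJ Hg. apply Hn; [exact HJ|].
        intros s [v [i [Hv ->]]]. apply Hg; exact Hv.
    + intros x. exists [], []. split; [exact Nnil| split; [exact Nnil| apply cong_refl]].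
Qed.
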